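(* Let $z\in\mathcal T_\rightarrow$ and let $z'$ belong to the closure of $\mathcal T_\leftarrow$ in $X^{(c)}$. Then $[z'\cdot\xi]\ne0$ for all $\xi$ in the support of $\gamma(z)$.
   Context: $[z\cdot z']=z_0z'_0-z_1z'_1-z_2z'_2$ on $\mathbb C^3$, $z^2=[z\cdot z]$; $X^{(c)}=\{z\in\mathbb C^3:z^2=-1\}$, $z=x+iy$; $G=SO_0(1,2)$; $V^+=\{y:y^2>0,y_0>0\}$; fix $e\in V^+$; $\mathcal T_\rightarrow=\{z\in X^{(c)}:y^2<0,{\rm sgn}\det(e,x,y)=-1\}$, $\mathcal T_\leftarrow$ the same with $+1$. Cycles: for $v>0$ let $z_v=(0,i\sinh v,\cosh v)\in\mathcal T_\rightarrow$; every $z\in\mathcal T_\rightarrow$ can be written $z=gz_v$ with $g\in G$, $v>0$. With $\xi(\Phi)=(1,\sin\Phi,\cos\Phi)$, $\gamma(z_v)$ is the path $\phi\mapsto\xi(\phi+iv)$, $\phi$ from $-\pi/2$ to $\pi/2$, and $\gamma(z)=g\gamma(z_v)$ (for any such representation $z=gz_v$). *)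

(* Defs.v *)
From Stdlib Require Import Reals.
From Coquelicot Require Import Coquelicot.
Open Scope R_scope.

Definition rv := (R * R * R)%type.
Definition cv := (C * C * C)%type.
Definition r0 (u : rv) : R := fst (fst u).
Definition r1 (u : rv) : R := snd (fst u).
Definition r2 (u : rv) : R := snd u.
Definition c0 (z : cv) : C := fst (fst z).
Definition c1 (z : cv) : C := snd (fst z).
Definition c2 (z : cv) : C := snd z.

Definition mdot (z w : cv) : C :=
  (c0 z * c0 w - c1 z * c1 w - c2 z * c2 w)%C.
Definition rdot (u w : rv) : R := r0 u * r0 w - r1 u * r1 w - r2 u * r2 w.

Definition Xc (z : cv) : Prop := mdot z z = RtoC (-1).

Definition re_part (z : cv) : rv := (Re (c0 z), Re (c1 z), Re (c2 z)).
Definition im_part (z : cv) : rv := (Im (c0 z), Im (c1 z), Im (c2 z)).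

Definition det3 (a b c : rv) : R :=
    r0 a * (r1 b * r2 c - r2 b * r1 c)
  - r0 b * (r1 a * r2 c - r2 a * r1 c)
  + r0 c * (r1 a * r2 b - r2 a * r1 b).

Definition Vplus (y : rv) : Prop := rdot y y > 0 /\ r0 y > 0.

Definition Tright (e : rv) (z : cv) : Prop :=
  Xc z /\ rdot (im_part z) (im_part z) < 0 /\ det3 e (re_part z) (im_part z) < 0.
Definition Tleft (e : rv) (z : cv) : Prop :=
  Xc z /\ rdot (im_part z) (im_part z) < 0 /\ det3 e (re_part z) (im_part z) > 0.

(* closure in X^(c) (topology induced from C^3) of a set S of X^(c) *)
Definition cdist (z w : cv) : R :=
  Cmod (c0 z - c0 w)%C + Cmod (c1 z - c1 w)%C + Cmod (c2 z - c2 w)%C.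
Definition closureX (S : cv -> Prop) (z : cv) : Prop :=
  Xc z /\ forall eps : R, eps > 0 -> exists w, S w /\ cdist w z < eps.

Definition mat := nat -> nat -> R.
Definition rapply (g : mat) (u : rv) : rv :=
  (g 0%nat 0%nat * r0 u + g 0%nat 1%nat * r1 u + g 0%nat 2%nat * r2 u,
   g 1%nat 0%nat * r0 u + g 1%nat 1%nat * r1 u + g 1%nat 2%nat * r2 u,
   g 2%nat 0%nat * r0 u + g 2%nat 1%nat * r1 u + g 2%nat 2%nat * r2 u).
Definition capply (g : mat) (z : cv) : cv :=
  ((RtoC (g 0%nat 0%nat) * c0 z + RtoC (g 0%nat 1%nat) * c1 z + RtoC (g 0%nat 2%nat) * c2 z)%C,
   (RtoC (g 1%nat 0%nat) * c0 z + RtoC (g 1%nat 1%nat) * c1 z + RtoC (g 1%nat 2%nat) * c2 z)%C,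
   (RtoC (g 2%nat 0%nat) * c0 z + RtoC (g 2%nat 1%nat) * c1 z + RtoC (g 2%nat 2%nat) * c2 z)%C).
Definition col (g : mat) (j : nat) : rv := (g 0%nat j, g 1%nat j, g 2%nat j).
Definition detm (g : mat) : R := det3 (col g 0) (col g 1) (col g 2).

(* G = SO_0(1,2): linear maps of R^3 preserving the form, of determinant 1,
   preserving the forward cone V^+ (orthochronous). *)
Definition inG (g : mat) : Prop :=
  (forall u w : rv, rdot (rapply g u) (rapply g w) = rdot u w) /\
  detm g = 1 /\
  (forall y : rv, Vplus y -> Vplus (rapply g y)).

Definition csin (Phi : C) : C := (sin (fst Phi) * cosh (snd Phi), cos (fst Phi) * sinh (snd Phi)).
Definition ccos (Phi : C) : C := (cos (fst Phi) * cosh (snd Phi), - (sin (fst Phi) * sinh (snd Phi))).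

Definition xi (Phi : C) : cv := (RtoC 1, csin Phi, ccos Phi).

Definition zv (v : R) : cv := (RtoC 0, (0, sinh v), RtoC (cosh v)).

(* support of the cycle gamma(z): the points g xi(phi + i v), phi in [-pi/2, pi/2],
   for a representation z = g z_v, g in G, v > 0 *)
Definition gamma_support (z : cv) (p : cv) : Prop :=
  exists (g : mat) (v phi : R),
    inG g /\ v > 0 /\ z = capply g (zv v) /\
    - (PI / 2) <= phi <= PI / 2 /\ p = capply g (xi (phi, v)).

(* Main.v *)
Require Import Defs.
From Stdlib Require Import Reals Lra Psatz.
From Coquelicot Require Import Coquelicot.
Open Scope R_scope.

Definition mk (P Q : rv) : cv :=
  ((r0 P, r0 Q), (r1 P, r1 Q), (r2 P, r2 Q)).

Lemma capply_mk g P Q : capply g (mk P Q) = mk (rapply g P) (rapply g Q).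
Proof.
  destruct P as [[p0 p1] p2]; destruct Q as [[q0 q1] q2].
  unfold capply, mk, rapply, Defs.c0, c1, c2, r0, r1, r2; simpl.
  unfold Cplus, Cmult, RtoC; simpl. f_equal; [f_equal|]; f_equal; ring.
Qed.

Lemma mdot_mk w P Q : mdot w (mk P Q) =
  (rdot (re_part w) P - rdot (im_part w) Q, rdot (re_part w) Q + rdot (im_part w) P).
Proof.
  destruct P as [[p0 p1] p2]; destruct Q as [[q0 q1] q2].
  destruct w as [[[a0 b0] [a1 b1]] [a2 b2]].
  unfold mdot, mk, rdot, re_part, im_part, Defs.c0, c1, c2, r0, r1, r2; simpl.
  unfold Cminus, Cplus, Copp, Cmult; simpl. f_equal; ring.
Qed.

Lemma mdot_self w : mdot w w =
  (rdot (re_part w) (re_part w) - rdot (im_part w) (im_part w), 2 * rdot (re_part w) (im_part w)).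
Proof.
  destruct w as [[[a0 b0] [a1 b1]] [a2 b2]].
  unfold mdot, rdot, re_part, im_part, Defs.c0, c1, c2, r0, r1, r2; simpl.
  unfold Cminus, Cplus, Copp, Cmult; simpl. f_equal; ring.
Qed.

Lemma rdot_g g u w : (forall u w : rv, rdot (rapply g u) (rapply g w) = rdot u w) ->
  rdot (rapply g u) (rapply g w) = rdot u w.
Proof. auto. Qed.

Lemma det_g g a b c : det3 (rapply g a) (rapply g b) (rapply g c) = detm g * det3 a b c.
Proof.
  destruct a as [[a0 a1] a2]; destruct b as [[b0 b1] b2]; destruct c as [[c0 c1] c2].
  unfold detm, col, det3, rapply, r0, r1, r2; simpl. ring.
Qed.

Lemma gram_det f1 f2 f3 u1 u2 u3 :
  det3 f1 f2 f3 * det3 u1 u2 u3 =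
  det3 (rdot f1 u1, rdot f2 u1, rdot f3 u1) (rdot f1 u2, rdot f2 u2, rdot f3 u2)
       (rdot f1 u3, rdot f2 u3, rdot f3 u3).
Proof.
  destruct f1 as [[a0 a1] a2]; destruct f2 as [[b0 b1] b2]; destruct f3 as [[c0 c1] c2].
  destruct u1 as [[d0 d1] d2]; destruct u2 as [[e0 e1] e2]; destruct u3 as [[h0 h1] h2].
  unfold det3, rdot, r0, r1, r2; simpl. ring.
Qed.

Lemma cramer_id f1 f2 f3 x :
  det3 f1 f2 f3 * r0 x = rdot x f1 * (r1 f2 * r2 f3 - r2 f2 * r1 f3)
    + rdot x f2 * (r1 f3 * r2 f1 - r2 f3 * r1 f1) + rdot x f3 * (r1 f1 * r2 f2 - r2 f1 * r1 f2)
  /\ det3 f1 f2 f3 * (- r1 x) = rdot x f1 * (r2 f2 * r0 f3 - r0 f2 * r2 f3)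
    + rdot x f2 * (r2 f3 * r0 f1 - r0 f3 * r2 f1) + rdot x f3 * (r2 f1 * r0 f2 - r0 f1 * r2 f2)
  /\ det3 f1 f2 f3 * (- r2 x) = rdot x f1 * (r0 f2 * r1 f3 - r1 f2 * r0 f3)
    + rdot x f2 * (r0 f3 * r1 f1 - r1 f3 * r0 f1) + rdot x f3 * (r0 f1 * r1 f2 - r1 f1 * r0 f2).
Proof.
  destruct f1 as [[a0 a1] a2]; destruct f2 as [[b0 b1] b2]; destruct f3 as [[c0 c1] c2].
  destruct x as [[d0 d1] d2].
  unfold det3, rdot, r0, r1, r2; simpl. repeat split; ring.
Qed.

Lemma cramer0 f1 f2 f3 x : det3 f1 f2 f3 <> 0 ->
  rdot x f1 = 0 -> rdot x f2 = 0 -> rdot x f3 = 0 ->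
  r0 x = 0 /\ r1 x = 0 /\ r2 x = 0.
Proof.
  intros HD H1 H2 H3. destruct (cramer_id f1 f2 f3 x) as [E0 [E1 E2]].
  rewrite H1, H2, H3 in *.
  repeat split.
  - apply (Rmult_eq_reg_l (det3 f1 f2 f3)); [lra|auto].
  - assert (det3 f1 f2 f3 * - r1 x = det3 f1 f2 f3 * 0) by lra.
    apply Rmult_eq_reg_l in H; auto. lra.
  - assert (det3 f1 f2 f3 * - r2 x = det3 f1 f2 f3 * 0) by lra.
    apply Rmult_eq_reg_l in H; auto. lra.
Qed.

Definition comb (s2 un uP uQ : R) (u n P Q : rv) : rv :=
  (s2 * r0 u - (un * r0 n - uP * r0 P - uQ * r0 Q),
   s2 * r1 u - (un * r1 n - uP * r1 P - uQ * r1 Q),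
   s2 * r2 u - (un * r2 n - uP * r2 P - uQ * r2 Q)).

Lemma comb_dot s2 un uP uQ u n P Q f :
  rdot (comb s2 un uP uQ u n P Q) f =
  s2 * rdot u f - un * rdot n f + uP * rdot P f + uQ * rdot Q f.
Proof.
  destruct u as [[a0 a1] a2]; destruct n as [[b0 b1] b2]; destruct P as [[c0 c1] c2].
  destruct Q as [[d0 d1] d2]; destruct f as [[e0 e1] e2].
  unfold comb, rdot, r0, r1, r2; simpl. ring.
Qed.

Lemma rdot_sym u w : rdot u w = rdot w u.
Proof. unfold rdot; ring. Qed.

Lemma complete (n P Q : rv) s2 : det3 n P Q <> 0 -> s2 <> 0 ->
  rdot n n = s2 -> rdot P P = -s2 -> rdot Q Q = -s2 ->
  rdot n P = 0 -> rdot n Q = 0 -> rdot P Q = 0 ->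
  forall u w, s2 * rdot u w = rdot u n * rdot w n - rdot u P * rdot w P - rdot u Q * rdot w Q.
Proof.
  intros HD Hs Hn HP HQ HnP HnQ HPQ u w.
  set (r := comb s2 (rdot u n) (rdot u P) (rdot u Q) u n P Q).
  assert (Z : r0 r = 0 /\ r1 r = 0 /\ r2 r = 0).
  { apply (cramer0 n P Q); auto; unfold r; rewrite comb_dot.
    - rewrite Hn, (rdot_sym P n), (rdot_sym Q n), HnP, HnQ; ring.
    - rewrite HnP, HP, (rdot_sym Q P), HPQ; ring.
    - rewrite HnQ, HPQ, HQ; ring. }
  assert (E : rdot r w = s2 * rdot u w - rdot u n * rdot n w + rdot u P * rdot P w + rdot u Q * rdot Q w)
    by (unfold r; apply comb_dot).
  assert (rdot r w = 0) by (unfold rdot; destruct Z as [-> [-> ->]]; ring).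
  rewrite (rdot_sym n w), (rdot_sym P w), (rdot_sym Q w) in E. lra.
Qed.

Lemma key_ineq en eP eQ bn bP bQ : en > 0 -> en * en > eP * eP + eQ * eQ ->
  bn * bn <= bP * bP + bQ * bQ -> bn * bn > 0 ->
  en * (bP * bP + bQ * bQ) - bn * (eP * bP + eQ * bQ) > 0.
Proof.
  intros H1 H2 H3 H4.
  set (rr := bP * bP + bQ * bQ). set (T := eP * bP + eQ * bQ).
  assert (Hr : rr > 0) by (unfold rr; lra).
  assert (HC : T * T <= (eP * eP + eQ * eQ) * rr).
  { assert (rr * (eP * eP + eQ * eQ) - T * T = (eP * bQ - eQ * bP) * (eP * bQ - eQ * bP))
      by (unfold rr, T; ring).
    pose proof (Rle_0_sqr (eP * bQ - eQ * bP)); unfold Rsqr in *; lra. }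
  assert ((eP*eP+eQ*eQ)*rr < en*en*rr) by (apply Rmult_lt_compat_r; lra).
  assert (HT : T * T < en * en * rr) by lra.
  assert (HB : (bn * T) * (bn * T) < (en * rr) * (en * rr)).
  { assert ((bn*T)*(bn*T) = (bn*bn) * (T*T)) by ring.
    assert ((bn*bn) * (T*T) <= rr * (T*T)) by (apply Rmult_le_compat_r; [apply Rle_0_sqr | unfold rr; lra]).
    assert (rr * (T*T) < rr * (en*en*rr)) by (apply Rmult_lt_compat_l; lra).
    nra. }
  assert (Hp : en * rr > 0) by nra.
  assert (bn * T < en * rr).
  { destruct (Rlt_or_le (bn*T) (en*rr)) as [h|h]; auto.
    assert ((en*rr)*(en*rr) <= (bn*T)*(bn*T)) by (apply Rmult_le_compat; lra). lra. }
  lra.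
Qed.

Lemma core (n P Q e a b : rv) s2 : det3 n P Q < 0 -> s2 > 0 ->
  rdot n n = s2 -> rdot P P = -s2 -> rdot Q Q = -s2 ->
  rdot n P = 0 -> rdot n Q = 0 -> rdot P Q = 0 ->
  rdot e n > 0 -> rdot e e > 0 ->
  rdot a a - rdot b b = -1 -> rdot a b = 0 -> rdot b b <= 0 -> det3 e a b >= 0 ->
  rdot a P = rdot b Q -> rdot a Q = - rdot b P -> False.
Proof.
  intros HD Hs Hn HP HQ HnP HnQ HPQ Hen Hee Hab1 Hab2 Hbb Hdet HaP HaQ.
  assert (C := complete n P Q s2 ltac:(lra) ltac:(lra) Hn HP HQ HnP HnQ HPQ).
  pose proof (C a b) as Cab. pose proof (C a a) as Caa. pose proof (C b b) as Cbb.
  pose proof (C e e) as Cee.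
  rewrite Hab2, HaP, HaQ in Cab. rewrite HaP, HaQ in Caa.
  assert (Hanbn : rdot a n * rdot b n = 0) by nra.
  assert (Hbn2 : rdot b n * rdot b n = rdot a n * rdot a n + s2) by nra.
  assert (Han : rdot a n = 0).
  { destruct (Rmult_integral _ _ Hanbn) as [H|H]; auto. rewrite H in Hbn2. nra. }
  pose proof (gram_det n P Q e a b) as G.
  rewrite !(rdot_sym n), !(rdot_sym P), !(rdot_sym Q) in G.
  rewrite Han, HaP, HaQ in G.
  assert (E : forall x1 x2 x3 y1 y2 y3 : R, det3 (x1, x2, x3) (0, y3, - y2) (y1, y2, y3) =
     x1 * (y2 * y2 + y3 * y3) - y1 * (x2 * y2 + x3 * y3))
    by (intros; unfold det3, r0, r1, r2; simpl; ring).
  rewrite E in G.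
  assert (K := key_ineq (rdot e n) (rdot e P) (rdot e Q) (rdot b n) (rdot b P) (rdot b Q)
     Hen ltac:(nra) ltac:(nra) ltac:(nra)).
  assert (det3 n P Q * det3 e a b <= 0).
  { assert (0 <= - det3 n P Q * det3 e a b) by (apply Rmult_le_pos; lra). lra. }
  lra.
Qed.

From Stdlib Require Import IndefiniteDescription.

Lemma tol_lim : is_lim_seq (fun k => / (INR k + 1)) 0.
Proof.
  assert (H : is_lim_seq (fun k => / INR k) (Rbar_inv p_infty)).
  { apply is_lim_seq_inv. apply is_lim_seq_INR. discriminate. }
  apply is_lim_seq_incr_1 in H.
  eapply is_lim_seq_ext; [|exact H]. intros k. cbv beta. rewrite S_INR. reflexivity.
Qed.

Lemma tol_pos k : / (INR k + 1) > 0.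
Proof. apply Rinv_0_lt_compat. pose proof (pos_INR k). lra. Qed.

Lemma closure_seq (S : cv -> Prop) z :
  (forall eps : R, eps > 0 -> exists w, S w /\ cdist w z < eps) ->
  exists u : nat -> cv, forall k, S (u k) /\ cdist (u k) z < / (INR k + 1).
Proof.
  intros H.
  exists (fun k => proj1_sig (constructive_indefinite_description _ (H _ (tol_pos k)))).
  intros k. exact (proj2_sig (constructive_indefinite_description _ (H _ (tol_pos k)))).
Qed.

Lemma coord_lim (u : nat -> cv) z (f : cv -> R) :
  (forall w, Rabs (f w - f z) <= cdist w z) ->
  (forall k, cdist (u k) z < / (INR k + 1)) ->
  is_lim_seq (fun k => f (u k)) (f z).
Proof.
  intros Hf Hu.
  apply is_lim_seq_le_le with (u := fun k => f z - / (INR k + 1)) (w := fun k => f z + / (INR k + 1)).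
  - intros k. specialize (Hf (u k)). specialize (Hu k). apply Rabs_le_between' in Hf. lra.
  - replace (Finite (f z)) with (Finite (f z - 0)) by (f_equal; ring).
    apply is_lim_seq_minus'. apply is_lim_seq_const. apply tol_lim.
  - replace (Finite (f z)) with (Finite (f z + 0)) by (f_equal; ring).
    apply is_lim_seq_plus'. apply is_lim_seq_const. apply tol_lim.
Qed.

Lemma abs_im_le c : Rabs (Im c) <= Cmod c.
Proof.
  destruct c as [x y]. unfold Cmod, Im; simpl.
  rewrite <- sqrt_Rsqr_abs. apply sqrt_le_1_alt. unfold Rsqr. nra.
Qed.

Lemma cdist_bounds w z :
  Rabs (Re (Defs.c0 w) - Re (Defs.c0 z)) <= cdist w z /\ Rabs (Im (Defs.c0 w) - Im (Defs.c0 z)) <= cdist w z /\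
  Rabs (Re (Defs.c1 w) - Re (Defs.c1 z)) <= cdist w z /\ Rabs (Im (Defs.c1 w) - Im (Defs.c1 z)) <= cdist w z /\
  Rabs (Re (Defs.c2 w) - Re (Defs.c2 z)) <= cdist w z /\ Rabs (Im (Defs.c2 w) - Im (Defs.c2 z)) <= cdist w z.
Proof.
  unfold cdist.
  pose proof (Cmod_ge_0 (Defs.c0 w - Defs.c0 z)%C). pose proof (Cmod_ge_0 (Defs.c1 w - Defs.c1 z)%C).
  pose proof (Cmod_ge_0 (Defs.c2 w - Defs.c2 z)%C).
  pose proof (re_le_Cmod (Defs.c0 w - Defs.c0 z)%C). pose proof (re_le_Cmod (Defs.c1 w - Defs.c1 z)%C).
  pose proof (re_le_Cmod (Defs.c2 w - Defs.c2 z)%C).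
  pose proof (abs_im_le (Defs.c0 w - Defs.c0 z)%C). pose proof (abs_im_le (Defs.c1 w - Defs.c1 z)%C).
  pose proof (abs_im_le (Defs.c2 w - Defs.c2 z)%C).
  replace (Re (Defs.c0 w - Defs.c0 z)%C) with (Re (Defs.c0 w) - Re (Defs.c0 z)) in * by (unfold Re; simpl; ring).
  replace (Re (Defs.c1 w - Defs.c1 z)%C) with (Re (Defs.c1 w) - Re (Defs.c1 z)) in * by (unfold Re; simpl; ring).
  replace (Re (Defs.c2 w - Defs.c2 z)%C) with (Re (Defs.c2 w) - Re (Defs.c2 z)) in * by (unfold Re; simpl; ring).
  replace (Im (Defs.c0 w - Defs.c0 z)%C) with (Im (Defs.c0 w) - Im (Defs.c0 z)) in * by (unfold Im; simpl; ring).
  replace (Im (Defs.c1 w - Defs.c1 z)%C) with (Im (Defs.c1 w) - Im (Defs.c1 z)) in * by (unfold Im; simpl; ring).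
  replace (Im (Defs.c2 w - Defs.c2 z)%C) with (Im (Defs.c2 w) - Im (Defs.c2 z)) in * by (unfold Im; simpl; ring).
  repeat split; lra.
Qed.

Ltac limtac := repeat first [ apply is_lim_seq_const | apply is_lim_seq_minus'
  | apply is_lim_seq_plus' | apply is_lim_seq_mult' | assumption ].

Lemma closure_facts e z' : closureX (Tleft e) z' ->
  rdot (im_part z') (im_part z') <= 0 /\ det3 e (re_part z') (im_part z') >= 0.
Proof.
  intros [Xz H]. destruct (closure_seq _ _ H) as [u Hu].
  assert (Hd : forall k, cdist (u k) z' < / (INR k + 1)) by (intros k; apply Hu).
  assert (L1 : is_lim_seq (fun k => Re (Defs.c0 (u k))) (Re (Defs.c0 z')))
    by (apply (coord_lim u z' (fun w => Re (Defs.c0 w))); [intros w; apply cdist_bounds | auto]).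
  assert (L2 : is_lim_seq (fun k => Im (Defs.c0 (u k))) (Im (Defs.c0 z')))
    by (apply (coord_lim u z' (fun w => Im (Defs.c0 w))); [intros w; apply cdist_bounds | auto]).
  assert (L3 : is_lim_seq (fun k => Re (Defs.c1 (u k))) (Re (Defs.c1 z')))
    by (apply (coord_lim u z' (fun w => Re (Defs.c1 w))); [intros w; apply cdist_bounds | auto]).
  assert (L4 : is_lim_seq (fun k => Im (Defs.c1 (u k))) (Im (Defs.c1 z')))
    by (apply (coord_lim u z' (fun w => Im (Defs.c1 w))); [intros w; apply cdist_bounds | auto]).
  assert (L5 : is_lim_seq (fun k => Re (Defs.c2 (u k))) (Re (Defs.c2 z')))
    by (apply (coord_lim u z' (fun w => Re (Defs.c2 w))); [intros w; apply cdist_bounds | auto]).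
  assert (L6 : is_lim_seq (fun k => Im (Defs.c2 (u k))) (Im (Defs.c2 z')))
    by (apply (coord_lim u z' (fun w => Im (Defs.c2 w))); [intros w; apply cdist_bounds | auto]).
  split.
  - assert (LF : is_lim_seq (fun k => rdot (im_part (u k)) (im_part (u k)))
                            (rdot (im_part z') (im_part z'))).
    { unfold rdot, im_part, r0, r1, r2; cbn [fst snd]. limtac. }
    assert (HB := is_lim_seq_le _ (fun _ => 0) _ 0 (fun k => Rlt_le _ _ (proj1 (proj2 (proj1 (Hu k)))))
                   LF (is_lim_seq_const 0)).
    simpl in HB. exact HB.
  - assert (LF : is_lim_seq (fun k => det3 e (re_part (u k)) (im_part (u k)))
                            (det3 e (re_part z') (im_part z'))).
    { unfold det3, re_part, im_part, r0, r1, r2; cbn [fst snd]. limtac. }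
    assert (HB := is_lim_seq_le (fun _ => 0) _ 0 _ (fun k => Rlt_le _ _ (proj2 (proj2 (proj1 (Hu k)))))
                   (is_lim_seq_const 0) LF).
    simpl in HB. lra.
Qed.

Lemma vplus_dot u w : Vplus u -> Vplus w -> rdot u w > 0.
Proof.
  destruct u as [[u0 u1] u2]; destruct w as [[w0 w1] w2].
  unfold Vplus, rdot, r0, r1, r2; simpl. intros [H1 H2] [H3 H4].
  set (T := u1 * w1 + u2 * w2).
  assert (T * T <= (u1*u1 + u2*u2) * (w1*w1+w2*w2)).
  { assert ((u1*u1 + u2*u2) * (w1*w1+w2*w2) - T*T = (u1*w2 - u2*w1)*(u1*w2-u2*w1)) by (unfold T; ring).
    pose proof (Rle_0_sqr (u1*w2 - u2*w1)); unfold Rsqr in *; lra. }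
  assert ((u1*u1 + u2*u2) * (w1*w1+w2*w2) <= (u0*u0) * (w1*w1+w2*w2))
    by (apply Rmult_le_compat_r; nra).
  assert ((u0*u0) * (w1*w1+w2*w2) < (u0*u0) * (w0*w0)) by (apply Rmult_lt_compat_l; nra).
  assert (T < u0 * w0).
  { destruct (Rlt_or_le T (u0*w0)) as [h|h]; auto.
    assert ((u0*w0)*(u0*w0) <= T*T) by (apply Rmult_le_compat; nra). nra. }
  unfold T in *; lra.
Qed.

Lemma cosh_sinh v : cosh v * cosh v - sinh v * sinh v = 1.
Proof.
  unfold cosh, sinh. rewrite exp_Ropp.
  assert (exp v > 0) by apply exp_pos. field. lra.
Qed.

Definition n0 (v phi : R) : rv := (cosh v, sin phi, cos phi).
Definition P0 (v phi : R) : rv := (1, sin phi * cosh v, cos phi * cosh v).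
Definition Q0 (v phi : R) : rv := (0, cos phi * sinh v, - (sin phi * sinh v)).

Lemma xi_mk v phi : xi (phi, v) = mk (P0 v phi) (Q0 v phi).
Proof. reflexivity. Qed.

Lemma base_facts v phi : v > 0 ->
  let s2 := sinh v * sinh v in
  s2 > 0 /\ rdot (n0 v phi) (n0 v phi) = s2 /\ rdot (P0 v phi) (P0 v phi) = - s2 /\
  rdot (Q0 v phi) (Q0 v phi) = - s2 /\ rdot (n0 v phi) (P0 v phi) = 0 /\
  rdot (n0 v phi) (Q0 v phi) = 0 /\ rdot (P0 v phi) (Q0 v phi) = 0 /\
  det3 (n0 v phi) (P0 v phi) (Q0 v phi) < 0 /\ Vplus (n0 v phi).
Proof.
  intros Hv s2.
  assert (Hs : sinh v > 0) by (rewrite <- sinh_0; apply sinh_lt; lra).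
  pose proof (cosh_sinh v) as Hc. pose proof (sin2_cos2 phi) as Ht. unfold Rsqr in Ht.
  assert (Hch : cosh v > 0) by (unfold cosh; pose proof (exp_pos v); pose proof (exp_pos (-v)); lra).
  unfold s2, n0, P0, Q0, Vplus, rdot, det3, r0, r1, r2; simpl.
  repeat split.
  - nra.
  - nra.
  - nra.
  - nra.
  - nra.
  - ring.
  - ring.
  - assert (E : cosh v * (sin phi * cosh v * - (sin phi * sinh v) - cos phi * cosh v * (cos phi * sinh v)) -
       1 * (sin phi * - (sin phi * sinh v) - cos phi * (cos phi * sinh v)) +
       0 * (sin phi * (cos phi * cosh v) - cos phi * (sin phi * cosh v)) = - (sinh v * sinh v * sinh v)).
    { transitivity (- sinh v * (sin phi * sin phi + cos phi * cos phi) * (cosh v * cosh v - 1)). ring.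
      rewrite Ht. replace (cosh v * cosh v - 1) with (sinh v * sinh v) by lra. ring. }
    rewrite E. assert (0 < sinh v * sinh v * sinh v) by (apply Rmult_lt_0_compat; [apply Rmult_lt_0_compat|]; lra). lra.
  - nra.
  - lra.
Qed.

Theorem proposition18 (e : rv) (he : Vplus e) (z z' : cv)
  (hz : Tright e z) (hz' : closureX (Tleft e) z') :
  forall p : cv, gamma_support z p -> mdot z' p <> RtoC 0.
Proof.
  intros p [g [v [phi [Hg [Hv [Hz [Hphi Hp]]]]]]] Hm. subst p.
  destruct Hg as [Hdot [Hdet Hcone]].
  rewrite xi_mk, capply_mk, mdot_mk in Hm. unfold RtoC in Hm.
  injection Hm as HA HB.
  destruct (base_facts v phi Hv) as [Hs [Hn [HP [HQ [HnP [HnQ [HPQ [HD Hn0]]]]]]]].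
  destruct (closure_facts e z' hz') as [Hbb Hdt].
  destruct hz' as [Xz _]. unfold Xc in Xz. rewrite mdot_self in Xz. unfold RtoC in Xz.
  injection Xz as X1 X2.
  apply (core (rapply g (n0 v phi)) (rapply g (P0 v phi)) (rapply g (Q0 v phi)) e
           (re_part z') (im_part z') (sinh v * sinh v)); rewrite ?Hdot; auto; try lra.
  - rewrite det_g, Hdet. lra.
  - apply vplus_dot; auto.
  - destruct he; auto.
Qed.
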